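(* Let $f_1 \in \mathcal{F}_{\mu_1,L_1}(\mathbb{R}^d)$ and $f_2 \in \mathcal{F}_{\mu_2,L_2}(\mathbb{R}^d)$ with $\mu_1\in[0,\infty)$, $\mu_2\in\mathbb{R}$, such that $F=f_1-f_2$ is bounded below with $F_{lo}:=\inf F$, $\emptyset\ne\operatorname{dom}\partial f_1\subseteq\operatorname{dom}\partial f_2$ and $\operatorname{range}\partial f_2\subseteq\operatorname{range}\partial f_1$. Assume exactly one of $f_1,f_2$ is smooth (exactly one of $L_1, L_2$ is $\infty$), and $\mu_1+\mu_2>0$ or $\mu_1=\mu_2=0$. Run $N\ge1$ DCA iterations from $x^0$: for $k=0,\dots,N-1$ select $g_2^k\in\partial f_2(x^k)$, $x^{k+1}\in\operatorname{argmin}_w\{f_1(w)-\langle g_2^k,w\rangle\}$, $g_1^{k+1}:=g_2^k\in\partial f_1(x^{k+1})$; $g_1^0\in\partial f_1(x^0)$, $g_2^N\in\partial f_2(x^N)$ arbitrary. If the parameters lie in one of the domains below, with $p := \sigma+\sigma^+$, then $$\tfrac12\min_{0\le k\le N}\|g_1^k-g_2^k\|^2\le\frac{F(x^0)-F(x^N)}{pN},$$ and if moreover $L_1>\mu_2$, $\tfrac12\min_{0\le k\le N}\|g_1^k-g_2^k\|^2\le\frac{F(x^0)-F_{lo}}{pN+\frac{1}{L_1-\mu_2}}$. Domains and values: (a) $L_1=\infty>L_2\ge\mu_1\ge0$ and $\mu_2(\mu_1^{-1}+\mu_2^{-1}+L_2^{-1})\ge0$: $\sigma=0$, $\sigma^+=\frac{L_2+\mu_1}{L_2^2}$.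 (b) $L_2=\infty>L_1\ge\mu_2\ge0$ and $\mu_1(\mu_1^{-1}+\mu_2^{-1}+L_1^{-1})\ge0$: $\sigma=\frac{L_1+\mu_2}{L_1^2}$, $\sigma^+=0$. (c) $L_2=\infty$ and $\mu_1>-\mu_2>0$: $\sigma=\frac{L_1^{-1}(\mu_1^{-1}+\mu_2^{-1})}{\mu_1^{-1}+\mu_2^{-1}-L_1^{-1}}$, $\sigma^+=0$. (d) $L_1=\infty$, $\mu_1>-\mu_2>0$ and $\mu_1^{-1}+\mu_2^{-1}+L_2^{-1}>0$: $\sigma=0$, $\sigma^+=\frac{\mu_1+\mu_2}{\mu_2^2}$.
   Context: For $\mu\in\mathbb{R}$ and $L\in(\mu,\infty]$, $\mathcal{F}_{\mu,L}(\mathbb{R}^d)$ is the class of proper lower semicontinuous $f:\mathbb{R}^d\to\mathbb{R}$ with $f-\frac{\mu}{2}\|\cdot\|^2$ convex and, if $L<\infty$, $\frac{L}{2}\|\cdot\|^2-f$ convex ($L$ may be nonpositive; $L=\infty$ means no upper curvature condition, i.e. possibly nonsmooth). Subdifferential: $\partial f(x)=\{g+\mu x: g\in\partial(f-\frac{\mu}{2}\|\cdot\|^2)(x)\}$, equal to $\{\nabla f(x)\}$ where differentiable. $\operatorname{dom}\partial f=\{x:\partial f(x)\neq\emptyset\}$, $\operatorname{range}\partial f=\bigcup_x\partial f(x)$. Convention: $1/\infty=0$. *)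

(* Defs.v *)
From HB Require Import structures.
From mathcomp Require Import all_boot all_order all_algebra.
From mathcomp Require Import all_classical all_reals all_analysis.
Set Implicit Arguments. Unset Strict Implicit. Unset Printing Implicit Defensive.
Import Order.TTheory GRing.Theory Num.Theory.
Import numFieldNormedType.Exports.
Local Open Scope classical_set_scope.
Local Open Scope ring_scope.

Section DefsSec.
Variables (R : realType) (d : nat).

Definition dotv (u v : 'rV[R]_d) : R := \sum_(i < d) u ord0 i * v ord0 i.
Definition sqnorm (v : 'rV[R]_d) : R := dotv v v.

Definition convex_fun (g : 'rV[R]_d -> R) : Prop :=
  forall (x y : 'rV[R]_d) (t : R), 0 <= t -> t <= 1 ->
    g (t *: x + (1 - t) *: y) <= t * g x + (1 - t) * g y.

(* f in F_{mu,L}(R^d); L : \bar R with L = +oo meaning L = infinity.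
   f is real-valued everywhere, hence proper. *)
Definition FmuL (mu : R) (L : \bar R) (f : 'rV[R]_d -> R) : Prop :=
  lower_semicontinuous (fun x => (f x)%:E) /\
  (mu%:E < L)%E /\
  convex_fun (fun x => f x - mu / 2 * sqnorm x) /\
  (forall r : R, L = r%:E -> convex_fun (fun x => r / 2 * sqnorm x - f x)).

Definition subdiff_cvx (g : 'rV[R]_d -> R) (x : 'rV[R]_d) : set 'rV[R]_d :=
  [set s | forall y, g x + dotv s (y - x) <= g y].

Definition subdiff (mu : R) (f : 'rV[R]_d -> R) (x : 'rV[R]_d) : set 'rV[R]_d :=
  [set s + mu *: x | s in subdiff_cvx (fun y => f y - mu / 2 * sqnorm y) x].

Definition dom_subdiff mu f : set 'rV[R]_d := [set x | subdiff mu f x !=set0].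
Definition range_subdiff mu f : set 'rV[R]_d := \bigcup_(x in [set: 'rV[R]_d]) subdiff mu f x.

Definition is_argmin (h : 'rV[R]_d -> R) (w : 'rV[R]_d) : Prop :=
  forall y, h w <= h y.

End DefsSec.

(* Extended inverse 1/x on \bar R with conventions 1/oo = 0 and 1/0 = +oo
   (the latter as limit from above: the classes F_{mu,L} grow with L and
   shrink with mu). *)
Definition einv {R : realType} (x : \bar R) : \bar R :=
  match x with
  | r%:E => if r == 0 then +oo%E else (r^-1)%:E
  | _ => 0%E
  end.

(* real inverse with 1/oo = 0 (used only where the argument is nonzero) *)
Definition rinv {R : realType} (x : \bar R) : R :=
  match x with
  | r%:E => r^-1
  | _ => 0
  end.

(* Main.v *)
Require Import Defs.
From HB Require Import structures.
From mathcomp Require Import all_boot all_order all_algebra.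
From mathcomp Require Import all_classical all_reals all_analysis.
From mathcomp Require Import ring lra.
Import Order.TTheory GRing.Theory Num.Theory.
Import numFieldNormedType.Exports.
Local Open Scope classical_set_scope.
Local Open Scope ring_scope.
Set Implicit Arguments. Unset Strict Implicit.
Ltac fld := field; repeat (apply/andP; split); rewrite ?expf_neq0 ?mulf_neq0 ?oppr_eq0 ?invr_eq0 //.

Section Aux.
Variables (R : realType) (d : nat).
Notation V := ('rV[R]_d).

Lemma dotvC (u v : V) : dotv u v = dotv v u.
Proof. by rewrite /dotv; apply: eq_bigr => i _; rewrite mulrC. Qed.

Lemma dotvDl (u v w : V) : dotv (u + v) w = dotv u w + dotv v w.
Proof. by rewrite /dotv -big_split; apply: eq_bigr => i _; rewrite mxE mulrDl. Qed.

Lemma dotvZl (a : R) (u w : V) : dotv (a *: u) w = a * dotv u w.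
Proof. by rewrite /dotv mulr_sumr; apply: eq_bigr => i _; rewrite mxE mulrA. Qed.

Lemma dotvNl (u w : V) : dotv (- u) w = - dotv u w.
Proof. by rewrite -scaleN1r dotvZl mulN1r. Qed.

Lemma dotvBl (u v w : V) : dotv (u - v) w = dotv u w - dotv v w.
Proof. by rewrite dotvDl dotvNl. Qed.

Lemma dotvDr (u v w : V) : dotv w (u + v) = dotv w u + dotv w v.
Proof. by rewrite dotvC dotvDl !(dotvC w). Qed.
Lemma dotvZr (a : R) (u w : V) : dotv w (a *: u) = a * dotv w u.
Proof. by rewrite dotvC dotvZl dotvC. Qed.
Lemma dotvNr (u w : V) : dotv w (- u) = - dotv w u.
Proof. by rewrite dotvC dotvNl dotvC. Qed.
Lemma dotvBr (u v w : V) : dotv w (u - v) = dotv w u - dotv w v.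
Proof. by rewrite dotvDr dotvNr. Qed.

Lemma sqnorm_ge0 (u : V) : 0 <= sqnorm u.
Proof. by rewrite /sqnorm /dotv; apply: sumr_ge0 => i _; rewrite -expr2 sqr_ge0. Qed.

Definition dotE := (dotvDl, dotvDr, dotvBl, dotvBr, dotvZl, dotvZr, dotvNl, dotvNr).

Lemma psd (u z : V) (a c b : R) : 0 <= a -> 0 <= b -> c ^+ 2 <= a * b ->
  0 <= a * sqnorm u + 2 * c * dotv u z + b * sqnorm z.
Proof.
move=> a0 b0 cab.
have H := sqnorm_ge0 (a *: u + c *: z).
have Hz := sqnorm_ge0 z.
have Hu := sqnorm_ge0 u.
move: H; rewrite /sqnorm !dotE (dotvC z u) -/(sqnorm u) -/(sqnorm z) => H.
have [aeq|ap] := eqVneq a 0.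
  subst a.
  have c0 : c = 0.
    by apply/eqP; rewrite -sqrf_eq0 eq_le sqr_ge0 andbT; move: cab; rewrite mul0r.
  by rewrite c0 !(mul0r, mulr0) !add0r mulr_ge0.
have apos : 0 < a by rewrite lt_neqAle eq_sym ap a0.
rewrite -(pmulr_rge0 _ apos).
have E : a * (a * sqnorm u + 2 * c * dotv u z + b * sqnorm z) =
  (a * (a * sqnorm u) + a * (c * dotv u z) + (c * (a * dotv u z) + c * (c * sqnorm z)))
  + (a * b - c ^+ 2) * sqnorm z by ring.
rewrite E; apply: addr_ge0.
  by move: H; rewrite !mulrDr.
by apply: mulr_ge0 => //; rewrite subr_ge0.
Qed.

Lemma lim_le (A B C : R) : (forall t, 0 < t -> t <= 1 -> A <= B + t * C) -> A <= B.
Proof.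
move=> H.
have [C0|C0] := leP C 0.
  by have := H 1 ltr01 (lexx _); rewrite mul1r => h; apply: le_trans h _; lra.
apply/ler_addgt0Pr => e e0.
have ec : 0 < e + C by lra.
have t0 : 0 < e / (e + C) by apply: divr_gt0.
have t1 : e / (e + C) <= 1 by rewrite ler_pdivrMr // mul1r; lra.
apply: le_trans (H _ t0 t1) _; rewrite lerD2l.
rewrite mulrAC ler_pdivrMr //; nra.
Qed.


Lemma sub_lb mu (f : V -> R) y g : subdiff mu f y g ->
  forall z, f y + dotv g (z - y) + mu / 2 * sqnorm (z - y) <= f z.
Proof.
move=> [s hs <-] z; have := hs z => /=.
rewrite /sqnorm !dotE (dotvC z y).
move=> h; lra.
Qed.


Lemma sub_ub mu (l : R) (f : V -> R) y g : FmuL mu l%:E f -> subdiff mu f y g ->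
  forall z, f z <= f y + dotv g (z - y) + l / 2 * sqnorm (z - y).
Proof.
move=> [_ [_ [_ hk]]] hg z.
have kc := hk l erefl.
apply: (@lim_le _ _ ((l - mu) / 2 * sqnorm (z - y))) => t t0 t1.
have ht : 0 < 1 + t by lra.
have ht' : 1 + t != 0 by rewrite gt_eqF.
pose tau := t / (1 + t).
have tau0 : 0 <= tau by rewrite /tau divr_ge0 // ltW.
have tau1 : tau <= 1 by rewrite /tau ler_pdivrMr // mul1r; lra.
have hvec : tau *: z + (1 - tau) *: (y - t *: (z - y)) = y.
  by apply/rowP => i; rewrite !mxE /tau; field.
have := kc z (y - t *: (z - y)) tau tau0 tau1; rewrite hvec /= => hc.
have hlb := @sub_lb mu f y g hg (y - t *: (z - y)).
set A := l / 2 * sqnorm z - f z in hc.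
set B := l / 2 * sqnorm (y - t *: (z - y)) - f (y - t *: (z - y)) in hc.
have hc' : (1 + t) * (l / 2 * sqnorm y - f y) <= t * A + B.
  have -> : t * A + B = (1 + t) * (tau * A + (1 - tau) * B) by rewrite /tau; field.
  by rewrite ler_pM2l.
rewrite /A /B in hc'.
rewrite -(ler_pM2l t0).
move: hc' hlb; rewrite /sqnorm !dotE (dotvC z y).
move=> h1 h2; lra.
Qed.


Lemma argmin_sub mu (L : \bar R) (f : V -> R) b y : FmuL mu L f ->
  is_argmin (fun w => f w - dotv b w) y -> subdiff mu f y b.
Proof.
move=> [_ [_ [hc _]]] ha.
exists (b - mu *: y); last by rewrite subrK.
move=> z /=.
apply: (@lim_le _ _ (mu / 2 * sqnorm (z - y))) => t t0 t1.
have t0' : 0 <= t by exact: ltW.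
have := hc z y t t0' t1 => /= h1.
have := ha (t *: z + (1 - t) *: y) => /= h2.
rewrite -(ler_pM2l t0).
move: h1 h2; rewrite /sqnorm !dotE ?(dotvC z y) ?(dotvC z b) ?(dotvC y b).
move=> h1 h2; lra.
Qed.


Lemma interp_k mu (l : R) (f : V -> R) xi xj gi gj k : FmuL mu l%:E f ->
  subdiff mu f xi gi -> subdiff mu f xj gj ->
  f xj + dotv gj (xi - xj) + mu / 2 * sqnorm (xi - xj) +
  (k - (l - mu) * k ^+ 2 / 2) * sqnorm (gi - gj - mu *: (xi - xj)) <= f xi.
Proof.
move=> hf hi hj.
set w := xi - k *: (gi - gj - mu *: (xi - xj)).
have h1 := @sub_lb mu f xj gj hj w.
have h2 := @sub_ub mu l f xi gi hf hi w.
move: h1 h2; rewrite /w /sqnorm !dotE.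
rewrite ?(dotvC xj xi) ?(dotvC gi xi) ?(dotvC gj xi) ?(dotvC gi xj) ?(dotvC gj xj) ?(dotvC gj gi).
rewrite ?(dotvC xi gi) ?(dotvC xi gj) ?(dotvC xj gi) ?(dotvC xj gj).
move=> h1 h2; lra.
Qed.


Lemma interp mu (l : R) (f : V -> R) xi xj gi gj : FmuL mu l%:E f ->
  subdiff mu f xi gi -> subdiff mu f xj gj ->
  f xj + dotv gj (xi - xj) + mu / 2 * sqnorm (xi - xj) +
  sqnorm (gi - gj - mu *: (xi - xj)) / (2 * (l - mu)) <= f xi.
Proof.
move=> hf hi hj.
have hM : 0 < l - mu by case: hf => _ [+ _]; rewrite lte_fin subr_gt0.
have hM' : l - mu != 0 by rewrite gt_eqF.
have := @interp_k mu l f xi xj gi gj (l - mu)^-1 hf hi hj.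
have -> : (l - mu)^-1 - (l - mu) * (l - mu)^-1 ^+ 2 / 2 = (2 * (l - mu))^-1 by field.
by rewrite (mulrC _^-1).
Qed.

Lemma finish_vec (m mo M s lam D : R) (u z : V) : 0 < M -> 0 <= lam ->
  (m + mo) * sqnorm u + sqnorm z / M <= 2 * D -> sqnorm z / M <= dotv z u ->
  0 <= m + mo - s * m ^+ 2 -> 0 <= 1 / M - s + 2 * lam / M ->
  (s * m + lam) ^+ 2 <= (m + mo - s * m ^+ 2) * (1 / M - s + 2 * lam / M) ->
  s * sqnorm (z + m *: u) <= 2 * D.
Proof.
move=> M0 l0 hE hS ha hb hc.
have hc' : (- (s * m + lam)) ^+ 2 <= (m + mo - s * m ^+ 2) * (1 / M - s + 2 * lam / M) by rewrite sqrrN.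
have hp := @psd u z _ (- (s * m + lam)) _ ha hb hc'.
rewrite (dotvC u z) in hp.
have hl : 0 <= lam * (dotv z u - sqnorm z / M) by apply: mulr_ge0; lra.
have -> : sqnorm (z + m *: u) = sqnorm z + 2 * m * dotv z u + m ^+ 2 * sqnorm u.
  by rewrite /sqnorm !dotE (dotvC u z); ring.
lra.
Qed.

End Aux.

Section Aux2.
Variables (R : realType) (d : nat).
Notation V := ('rV[R]_d).

Lemma sqnormN (v : V) : sqnorm (- v) = sqnorm v.
Proof. by rewrite /sqnorm dotvNl dotvNr opprK. Qed.

Lemma step1 mu1 mu2 (l1 : R) (f1 f2 : V -> R) x0 x1 a b :
  FmuL mu1 l1%:E f1 -> subdiff mu1 f1 x0 a -> subdiff mu1 f1 x1 b ->
  subdiff mu2 f2 x0 b ->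
  (mu1 + mu2) * sqnorm (x0 - x1) + sqnorm (a - b - mu1 *: (x0 - x1)) / (l1 - mu1)
    <= 2 * ((f1 x0 - f2 x0) - (f1 x1 - f2 x1)) /\
  sqnorm (a - b - mu1 *: (x0 - x1)) / (l1 - mu1)
    <= dotv (a - b - mu1 *: (x0 - x1)) (x0 - x1).
Proof.
move=> hf ha hb hb2.
have hM : 0 < l1 - mu1 by case: hf => _ [+ _]; rewrite lte_fin subr_gt0.
have q1 := interp hf ha hb.
have q2 := interp hf hb ha.
have q3 := sub_lb hb2 x1.
have e1 : x1 - x0 = - (x0 - x1) by rewrite opprB.
have e2 : b - a - mu1 *: (x1 - x0) = - (a - b - mu1 *: (x0 - x1)).
  by apply/rowP => i; rewrite !mxE; ring.
rewrite e2 e1 !sqnormN dotvNr in q2.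
rewrite e1 sqnormN dotvNr in q3.
have ez : dotv (a - b - mu1 *: (x0 - x1)) (x0 - x1) =
  dotv a (x0 - x1) - dotv b (x0 - x1) - mu1 * sqnorm (x0 - x1).
  by rewrite !dotvBl dotvZl.
rewrite ez.
set U := sqnorm (x0 - x1) in q1 q2 q3 *.
set Z := sqnorm (a - b - mu1 *: (x0 - x1)) in q1 q2 q3 *.
have hZ : 0 <= Z / (l1 - mu1) by apply: divr_ge0; [exact: sqnorm_ge0 | exact: ltW].
have e3 : Z / (2 * (l1 - mu1)) = Z / (l1 - mu1) / 2.
  by rewrite invfM mulrA mulrAC.
rewrite e3 in q1 q2.

split; lra.
Qed.


Lemma step2 mu1 mu2 (l2 : R) (f1 f2 : V -> R) x0 x1 b c :
  FmuL mu2 l2%:E f2 -> subdiff mu1 f1 x1 b -> subdiff mu2 f2 x0 b ->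
  subdiff mu2 f2 x1 c ->
  (mu1 + mu2) * sqnorm (x0 - x1) + sqnorm (b - c - mu2 *: (x0 - x1)) / (l2 - mu2)
    <= 2 * ((f1 x0 - f2 x0) - (f1 x1 - f2 x1)) /\
  sqnorm (b - c - mu2 *: (x0 - x1)) / (l2 - mu2)
    <= dotv (b - c - mu2 *: (x0 - x1)) (x0 - x1).
Proof.
move=> hf hb hb2 hc.
have hM : 0 < l2 - mu2 by case: hf => _ [+ _]; rewrite lte_fin subr_gt0.
have q1 := sub_lb hb x0.
have q2 := interp hf hc hb2.
have q3 := interp hf hb2 hc.
have e1 : x1 - x0 = - (x0 - x1) by rewrite opprB.
have e2 : c - b - mu2 *: (x1 - x0) = - (b - c - mu2 *: (x0 - x1)).
  by apply/rowP => i; rewrite !mxE; ring.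
rewrite e2 e1 !sqnormN dotvNr in q2.
have ez : dotv (b - c - mu2 *: (x0 - x1)) (x0 - x1) =
  dotv b (x0 - x1) - dotv c (x0 - x1) - mu2 * sqnorm (x0 - x1).
  by rewrite !dotvBl dotvZl.
rewrite ez.
set U := sqnorm (x0 - x1) in q1 q2 q3 *.
set Z := sqnorm (b - c - mu2 *: (x0 - x1)) in q1 q2 q3 *.
have e3 : Z / (2 * (l2 - mu2)) = Z / (l2 - mu2) / 2.
  by rewrite invfM mulrA mulrAC.
rewrite e3 in q2 q3.
split; lra.
Qed.


Lemma descent mu1 mu2 (l1 : R) (f1 f2 : V -> R) x ga gb k :
  FmuL mu1 l1%:E f1 -> subdiff mu1 f1 x ga -> subdiff mu2 f2 x gb ->
  f1 (x - k *: (ga - gb)) - f2 (x - k *: (ga - gb)) <=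
  (f1 x - f2 x) - (k - (l1 - mu2) * k ^+ 2 / 2) * sqnorm (ga - gb).
Proof.
move=> hf ha hb.
have h1 := sub_ub hf ha (x - k *: (ga - gb)).
have h2 := sub_lb hb (x - k *: (ga - gb)).
have e : x - k *: (ga - gb) - x = - (k *: (ga - gb)) by rewrite addrAC subrr add0r.
rewrite e sqnormN !dotvNr !dotvZr in h1 h2.
have e2 : sqnorm (k *: (ga - gb)) = k ^+ 2 * sqnorm (ga - gb).
  by rewrite /sqnorm dotvZl dotvZr mulrA expr2.
rewrite e2 in h1 h2.
have e3 : k * dotv ga (ga - gb) - k * dotv gb (ga - gb) = k * sqnorm (ga - gb).
  by rewrite -mulrBr -dotvBl.
lra.
Qed.

End Aux2.

Section Par.
Variable R : realType.

Lemma params_ab (m mo L : R) : 0 < L -> m < L -> 0 <= mo -> 0 <= L * m + L * mo + m * mo ->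
  let s := (L + mo) / L ^+ 2 in let lam := mo / L in let M := L - m in
  [/\ 0 <= lam, 0 <= m + mo - s * m ^+ 2, 0 <= 1 / M - s + 2 * lam / M &
   (s * m + lam) ^+ 2 <= (m + mo - s * m ^+ 2) * (1 / M - s + 2 * lam / M)].
Proof.
move=> L0 mL mo0 Q0 s lam M.
have M0 : 0 < M by rewrite /M subr_gt0.
have L0' : L != 0 by rewrite gt_eqF.
have M0' : L - m != 0 by rewrite gt_eqF.
set Q := L * m + L * mo + m * mo in Q0.
have ea : m + mo - s * m ^+ 2 = M * Q / L ^+ 2.
  by rewrite /s /Q /M; fld.
have eb : 1 / M - s + 2 * lam / M = Q / (L ^+ 2 * M) by rewrite /s /Q /M /lam; fld.
have ec : s * m + lam = Q / L ^+ 2 by rewrite /s /Q /lam; fld.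
rewrite ea eb ec; split.
- by rewrite /lam divr_ge0 // ltW.
- by rewrite divr_ge0 ?sqr_ge0 // mulr_ge0 // ltW.
- by rewrite divr_ge0 // mulr_ge0 ?sqr_ge0 // ltW.
- by rewrite le_eqVlt; apply/orP; left; apply/eqP; fld.
Qed.

Lemma params_c (m1 m2 L : R) : 0 < m1 + m2 -> m2 < 0 -> m1 < L ->
  let K := (m1 + m2) * L - m1 * m2 in
  let s := (m1 + m2) / K in let M := L - m1 in
  [/\ 0 <= m1 + m2 - s * m1 ^+ 2, 0 <= 1 / M - s + 2 * 0 / M &
   (s * m1 + 0) ^+ 2 <= (m1 + m2 - s * m1 ^+ 2) * (1 / M - s + 2 * 0 / M)].
Proof.
move=> h12 h2 h1L K s M.
have M0 : 0 < M by rewrite /M subr_gt0.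
have m10 : 0 < m1 by lra.
have L0 : 0 < L by lra.
have K0 : 0 < K by rewrite /K; nra.
have K0' : K != 0 by rewrite gt_eqF.
have M0' : L - m1 != 0 by rewrite gt_eqF.
have ea : m1 + m2 - s * m1 ^+ 2 = (m1 + m2) ^+ 2 * M / K by rewrite /s /K /M; fld.
have eb : 1 / M - s + 2 * 0 / M = m1 ^+ 2 / (K * M) by rewrite /s /K /M; fld.
rewrite ea eb; split.
- by rewrite divr_ge0 ?mulr_ge0 ?sqr_ge0 // ltW.
- by rewrite divr_ge0 ?sqr_ge0 // mulr_ge0 // ltW.
- by rewrite le_eqVlt; apply/orP; left; apply/eqP; rewrite /s; fld.
Qed.

Lemma params_d (m1 m2 L : R) : 0 < m1 + m2 -> m2 < 0 -> m2 < L ->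
  (m1 + m2) * (L + m2) <= m2 ^+ 2 ->
  let s := (m1 + m2) / m2 ^+ 2 in let lam := - ((m1 + m2) / m2) in let M := L - m2 in
  [/\ 0 <= lam, 0 <= m2 + m1 - s * m2 ^+ 2, 0 <= 1 / M - s + 2 * lam / M &
   (s * m2 + lam) ^+ 2 <= (m2 + m1 - s * m2 ^+ 2) * (1 / M - s + 2 * lam / M)].
Proof.
move=> h12 h2 h2L hc s lam M.
have M0 : 0 < M by rewrite /M subr_gt0.
have m20 : m2 != 0 by rewrite lt_eqF.
have M0' : L - m2 != 0 by rewrite gt_eqF.
have ea : m2 + m1 - s * m2 ^+ 2 = 0 by rewrite /s; fld.
have ec : s * m2 + lam = 0 by rewrite /s /lam; fld.
have eb : 1 / M - s + 2 * lam / M = (m2 ^+ 2 - (m1 + m2) * (L + m2)) / (m2 ^+ 2 * M).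
  by rewrite /s /lam /M; fld.
rewrite ea ec eb expr0n /= mul0r; split => //.
- by rewrite /lam -mulrN -invrN; apply: divr_ge0; lra.
- by rewrite divr_ge0 ?subr_ge0 // mulr_ge0 ?sqr_ge0 // ltW.
Qed.

End Par.

Unset Implicit Arguments. Unset Strict Implicit.

Theorem corollary2 (R : realType) (d : nat)
  (mu1 mu2 : R) (L1 L2 : \bar R) (f1 f2 : 'rV[R]_d -> R)
  (N : nat) (x g1 g2 : nat -> 'rV[R]_d) (sigma sigmap : R) :
  FmuL mu1 L1 f1 -> FmuL mu2 L2 f2 ->
  0 <= mu1 ->
  (exists m : R, forall y, m <= f1 y - f2 y) ->
  dom_subdiff mu1 f1 !=set0 ->
  dom_subdiff mu1 f1 `<=` dom_subdiff mu2 f2 ->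
  range_subdiff mu2 f2 `<=` range_subdiff mu1 f1 ->
  ((L1 = +oo%E /\ L2 != +oo%E) \/ (L1 != +oo%E /\ L2 = +oo%E)) ->
  (0 < mu1 + mu2 \/ (mu1 = 0 /\ mu2 = 0)) ->
  (1 <= N)%N ->
  (* DCA iterations *)
  (forall k, (k < N)%N ->
     subdiff mu2 f2 (x k) (g2 k) /\
     is_argmin (fun w => f1 w - dotv (g2 k) w) (x k.+1) /\
     g1 k.+1 = g2 k) ->
  subdiff mu1 f1 (x 0%N) (g1 0%N) ->
  subdiff mu2 f2 (x N) (g2 N) ->
  (* parameter domains and values of sigma, sigma^+ *)
  ((* (a) *)
   (exists l2 : R, L1 = +oo%E /\ L2 = l2%:E /\ mu1 <= l2 /\
      (0 <= mu2%:E * (einv mu1%:E + einv mu2%:E + einv L2))%E /\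
      sigma = 0 /\ sigmap = (l2 + mu1) / l2 ^+ 2) \/
   (* (b) *)
   (exists l1 : R, L2 = +oo%E /\ L1 = l1%:E /\ mu2 <= l1 /\ 0 <= mu2 /\
      (0 <= mu1%:E * (einv mu1%:E + einv mu2%:E + einv L1))%E /\
      sigma = (l1 + mu2) / l1 ^+ 2 /\ sigmap = 0) \/
   (* (c) *)
   (exists l1 : R, L2 = +oo%E /\ L1 = l1%:E /\ - mu2 < mu1 /\ 0 < - mu2 /\
      sigma = l1^-1 * (mu1^-1 + mu2^-1) / (mu1^-1 + mu2^-1 - l1^-1) /\
      sigmap = 0) \/
   (* (d) *)
   (L1 = +oo%E /\ - mu2 < mu1 /\ 0 < - mu2 /\
      (0 < einv mu1%:E + einv mu2%:E + einv L2)%E /\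
      sigma = 0 /\ sigmap = (mu1 + mu2) / mu2 ^+ 2)) ->
  let F := fun y => f1 y - f2 y in
  let p := sigma + sigmap in
  let minres := \big[Num.min/ sqnorm (g1 0%N - g2 0%N) / 2]_(k < N.+1)
                   (sqnorm (g1 k - g2 k) / 2) in
  minres <= (F (x 0%N) - F (x N)) / (p * N%:R) /\
  ((mu2%:E < L1)%E ->
     minres <= (F (x 0%N) - inf (range F)) / (p * N%:R + rinv (L1 - mu2%:E)%E)).
Proof.
move=> hf1 hf2 mu10 [m hm] _ _ _ hL hmu hN hit h0 hN2 hcase F p minres.
have sg1 : forall k, (k <= N)%N -> subdiff mu1 f1 (x k) (g1 k).
  case=> [|k] hk //; have [_ [ham hg]] := hit k hk.
  by rewrite hg; exact: argmin_sub hf1 ham.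
have sg2 : forall k, (k <= N)%N -> subdiff mu2 f2 (x k) (g2 k).
  move=> k hk; case: (ltnP k N) => hkN; first exact: (hit k hkN).1.
  by have -> : k = N by apply/eqP; rewrite eqn_leq hk hkN.
have hmin : forall k, (k <= N)%N -> minres <= sqnorm (g1 k - g2 k) / 2.
  move=> k hk.
  exact: (@bigmin_le _ _ _ _ (Ordinal (hk : (k < N.+1)%N))
            (fun i : 'I_N.+1 => sqnorm (g1 i - g2 i) / 2)).
have hsg1' : forall k, (k < N)%N -> subdiff mu1 f1 (x k.+1) (g2 k).
  by move=> k hk; have := sg1 k.+1 hk; rewrite (hit k hk).2.2.
have mu2L2 : forall l2, L2 = l2%:E -> mu2 < l2.
  by move=> l2 e; case: hf2 => _ [+ _]; rewrite e lte_fin.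
have mu1L1 : forall l1, L1 = l1%:E -> mu1 < l1.
  by move=> l1 e; case: hf1 => _ [+ _]; rewrite e lte_fin.
have [hp hstep] : 0 < p /\ (forall k, (k < N)%N -> p * minres <= F (x k) - F (x k.+1)).
  case: hcase => [[l2 [eL1 [eL2 [hml2 [hcond [es esp]]]]]] | [
                  [l1 [eL2 [eL1 [hm2l1 [hm20 [_ [es esp]]]]]]] | [
                  [l1 [eL2 [eL1 [h21 [h2p [es esp]]]]]] |
                  [eL1 [h21 [h2p [hcond [es esp]]]]]]]].
  -
    rewrite /p es esp add0r.
    have hf2' : FmuL mu2 l2%:E f2 by rewrite -eL2.
    have hm2l2 := mu2L2 l2 eL2.
    have l20 : 0 < l2 by case: hmu => [h|[h1 h2]]; lra.
    have hQ : 0 <= l2 * mu2 + l2 * mu1 + mu2 * mu1.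
      case: (lerP 0 mu2) => h2.
        have := mulr_ge0 (ltW l20) h2; have := mulr_ge0 (ltW l20) mu10;
        have := mulr_ge0 h2 mu10; lra.
      have mu1p : 0 < mu1 by case: hmu => [h|[h1 h3]]; lra.
      have mu1nz : mu1 != 0 by rewrite gt_eqF.
      have mu2nz : mu2 != 0 by rewrite lt_eqF.
      have l2nz : l2 != 0 by rewrite gt_eqF.
      move: hcond; rewrite eL2 /einv (negbTE mu1nz) (negbTE mu2nz) (negbTE l2nz).
      rewrite -!EFinD -EFinM lee_fin => hc.
      have -> : l2 * mu2 + l2 * mu1 + mu2 * mu1 =
        mu1 * l2 * (mu2 * (mu1^-1 + mu2^-1 + l2^-1)) by fld.
      by apply: mulr_ge0 => //; apply: mulr_ge0; lra.
    have [hlam ha hb hc] := params_ab l20 hm2l2 mu10 hQ.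
    split; first by apply: divr_gt0; [lra | exact: exprn_gt0].
    move=> k hk.
    have [hE hS] := step2 hf2' (hsg1' k hk) (sg2 k (ltnW hk)) (sg2 k.+1 hk).
    rewrite (addrC mu1 mu2) in hE.
    have M0 : 0 < l2 - mu2 by rewrite subr_gt0.
    have := finish_vec M0 hlam hE hS ha hb hc.
    rewrite subrK -(hit k hk).2.2 => hfin.
    have hmk := hmin k.+1 hk.
    have sp : 0 <= (l2 + mu1) / l2 ^+ 2 by apply: divr_ge0; [lra | exact: sqr_ge0].
    apply: le_trans (ler_wpM2l sp hmk) _; rewrite /F; lra.
  -
    rewrite /p es esp addr0.
    have hf1' : FmuL mu1 l1%:E f1 by rewrite -eL1.
    have hm1l1 := mu1L1 l1 eL1.
    have l10 : 0 < l1 by lra.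
    have hQ : 0 <= l1 * mu1 + l1 * mu2 + mu1 * mu2.
      have := mulr_ge0 (ltW l10) hm20; have := mulr_ge0 (ltW l10) mu10;
      have := mulr_ge0 mu10 hm20; lra.
    have [hlam ha hb hc] := params_ab l10 hm1l1 hm20 hQ.
    split; first by apply: divr_gt0; [lra | exact: exprn_gt0].
    move=> k hk.
    have [hE hS] := step1 hf1' (sg1 k (ltnW hk)) (hsg1' k hk) (sg2 k (ltnW hk)).
    have M0 : 0 < l1 - mu1 by rewrite subr_gt0.
    have := finish_vec M0 hlam hE hS ha hb hc.
    rewrite subrK => hfin.
    have hmk := hmin k (ltnW hk).
    have sp : 0 <= (l1 + mu2) / l1 ^+ 2 by apply: divr_ge0; [lra | exact: sqr_ge0].
    apply: le_trans (ler_wpM2l sp hmk) _; rewrite /F; lra.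
  -
    rewrite /p esp addr0.
    have hf1' : FmuL mu1 l1%:E f1 by rewrite -eL1.
    have hm1l1 := mu1L1 l1 eL1.
    have h12 : 0 < mu1 + mu2 by lra.
    have h2 : mu2 < 0 by lra.
    have l10 : 0 < l1 by lra.
    have mu1nz : mu1 != 0 by rewrite gt_eqF //; lra.
    have mu2nz : mu2 != 0 by rewrite lt_eqF.
    have l1nz : l1 != 0 by rewrite gt_eqF.
    have K0 : 0 < (mu1 + mu2) * l1 - mu1 * mu2.
      have := mulr_gt0 h12 l10; have : mu1 * mu2 < 0 by rewrite pmulr_rlt0 //; lra.
      lra.
    have Knz : (mu1 + mu2) * l1 - mu1 * mu2 != 0 by rewrite gt_eqF.
    have Dnz : mu1^-1 + mu2^-1 - l1^-1 != 0.
      have -> : mu1^-1 + mu2^-1 - l1^-1 = ((mu1 + mu2) * l1 - mu1 * mu2) / (mu1 * mu2 * l1) by fld.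
      by rewrite mulf_neq0 // invr_eq0 !mulf_neq0.
    have esig : sigma = (mu1 + mu2) / ((mu1 + mu2) * l1 - mu1 * mu2) by rewrite es; fld.
    rewrite esig.
    have [ha hb hc] := params_c h12 h2 hm1l1.
    split; first by apply: divr_gt0.
    move=> k hk.
    have [hE hS] := step1 hf1' (sg1 k (ltnW hk)) (hsg1' k hk) (sg2 k (ltnW hk)).
    have M0 : 0 < l1 - mu1 by rewrite subr_gt0.
    have := finish_vec M0 (lexx 0) hE hS ha hb hc.
    rewrite subrK => hfin.
    have hmk := hmin k (ltnW hk).
    have sp : 0 <= (mu1 + mu2) / ((mu1 + mu2) * l1 - mu1 * mu2).
      by apply: divr_ge0; apply: ltW.
    apply: le_trans (ler_wpM2l sp hmk) _; rewrite /F; lra.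
  -
    rewrite /p es esp add0r.
    have hL2 : L2 != +oo%E by case: hL => [[_ //]|[hL1 _]]; rewrite eL1 in hL1.
    have h12 : 0 < mu1 + mu2 by lra.
    have h2 : mu2 < 0 by lra.
    have mu1nz : mu1 != 0 by rewrite gt_eqF //; lra.
    have mu2nz : mu2 != 0 by rewrite lt_eqF.
    case eL2 : L2 hcond hf2 hL2 => [l2| |] hcond hf2' hL2 //; last first.
      by case: hf2' => _ [] /=.
    have hm2l2 : mu2 < l2 by case: hf2' => _ [+ _]; rewrite lte_fin.
    have hcd : (mu1 + mu2) * (l2 + mu2) <= mu2 ^+ 2.
      case: (lerP (l2 + mu2) 0) => hl.
        have hh : 0 <= (mu1 + mu2) * (- (l2 + mu2)) by apply: mulr_ge0; lra.
        have := sqr_ge0 mu2; lra.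
      have l20 : 0 < l2 by lra.
      have l2nz : l2 != 0 by rewrite gt_eqF.
      move: hcond; rewrite /einv (negbTE mu1nz) (negbTE mu2nz) (negbTE l2nz).
      rewrite -!EFinD lte_fin => hc.
      have E : (mu1 + mu2) * (l2 + mu2) - mu2 ^+ 2 =
        (mu1^-1 + mu2^-1 + l2^-1) * (mu1 * mu2 * l2) by fld.
      have : mu1 * mu2 * l2 < 0.
        rewrite -mulrA pmulr_rlt0; last lra.
        by rewrite pmulr_llt0.
      move=> hn; have : (mu1^-1 + mu2^-1 + l2^-1) * (mu1 * mu2 * l2) < 0.
        by rewrite pmulr_rlt0.
      rewrite -E; lra.
    have [hlam ha hb hc] := params_d h12 h2 hm2l2 hcd.
    have m2sq : 0 < mu2 ^+ 2 by rewrite expr2; nra.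
    split; first by apply: divr_gt0.
    move=> k hk.
    have [hE hS] := step2 hf2' (hsg1' k hk) (sg2 k (ltnW hk)) (sg2 k.+1 hk).
    rewrite (addrC mu1 mu2) in hE.
    have M0 : 0 < l2 - mu2 by rewrite subr_gt0.
    have := finish_vec M0 hlam hE hS ha hb hc.
    rewrite subrK -(hit k hk).2.2 => hfin.
    have hmk := hmin k.+1 hk.
    have sp : 0 <= (mu1 + mu2) / mu2 ^+ 2 by apply: divr_ge0; [lra | exact: sqr_ge0].
    apply: le_trans (ler_wpM2l sp hmk) _; rewrite /F; lra.
have tele : forall n, (n <= N)%N -> n%:R * (p * minres) <= F (x 0%N) - F (x n).
  elim=> [|n IH] hn; first by rewrite mul0r /F subrr.
  have := IH (ltnW hn); have := hstep n hn; rewrite -natr1; lra.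
have hN0 : (0:R) < N%:R by rewrite ltr0n.
have hpN : 0 < p * N%:R by apply: mulr_gt0.
have hT := tele N (leqnn N).
have hlb : has_lbound (range F) by exists m => _ [y _ <-]; exact: hm.
have hinf : forall y, inf (range F) <= F y by move=> y; apply: (ge_inf hlb); exists y.
split.
  by rewrite ler_pdivlMr //; lra.
move=> hL1.
case eL1 : L1 hf1 hL1 => [l1| |] hf1' hL1' /=.
- have q0 : 0 < l1 - mu2 by move: hL1'; rewrite lte_fin subr_gt0.
  try rewrite -EFinB /=.
  have hd := @descent _ _ mu1 mu2 l1 f1 f2 (x N) (g1 N) (g2 N) (l1 - mu2)^-1 hf1' (sg1 N (leqnn N)) (sg2 N (leqnn N)).
  have qnz : l1 - mu2 != 0 by rewrite gt_eqF.
  have ec : (l1 - mu2)^-1 - (l1 - mu2) * (l1 - mu2)^-1 ^+ 2 / 2 = (l1 - mu2)^-1 / 2 by fld.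
  rewrite ec in hd.
  have hz := hinf (x N - (l1 - mu2)^-1 *: (g1 N - g2 N)).
  have hmN := hmin N (leqnn N).
  set iq := (l1 - mu2)^-1 in hd hz *.
  have iq0 : 0 < iq by rewrite /iq invr_gt0.
  have hmq := ler_wpM2r (ltW iq0) hmN.
  rewrite ler_pdivlMr; last by apply: addr_gt0.
  rewrite /F in hz hT *; lra.
- rewrite addr0 ler_pdivlMr //.
  have := hinf (x N); rewrite /F in hT *; lra.
- by [].
Qed.
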